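(* Let $a,b,g,m,n>0$ and $0<e<1$, and consider the planar system $$\dot x=a-ex-\frac{xy}{1+gy},\qquad \dot y=\frac{xy}{1+gy}-y-\frac{my}{b+ny}.$$ Let $a_1=(eg+1)n$, $a_2=(b+m)(eg+1)+n(e-a)$, $a_3=e(b+m)-ab$, $\Delta=a_2^2-4a_1a_3$, and $$a_4=\frac{[en-(b-m)(eg+1)]+\sqrt{4m(eg+1)[ne-b(eg+1)]}}{n}.$$ Suppose $n>\frac{(eg+1)b^2+m(eg+1)b}{me}$ and $a_4<a<\frac{e(m+b)}{b}$. Let $y_2=\frac{-a_2-\sqrt{\Delta}}{2a_1}$ and $x_2=\frac{a(1+gy_2)}{e+(eg+1)y_2}$, so that $E_2=(x_2,y_2)$ is an endemic equilibrium of the system. Then $E_2$ is a saddle point.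
   Context: The system is a rescaled SIR epidemic model with saturated infection rate and saturated treatment rate. *)

(* Defs.v *)
From HB Require Import structures.
From mathcomp Require Import all_boot all_order all_algebra.
From mathcomp Require Import all_classical all_reals all_analysis.
Set Implicit Arguments. Unset Strict Implicit. Unset Printing Implicit Defensive.
Import Order.TTheory GRing.Theory Num.Theory.
Local Open Scope ring_scope.

Definition sir_f (R : realType) (a b e g m n : R) (x y : R) : R :=
  a - e * x - x * y / (1 + g * y).
Definition sir_g (R : realType) (a b e g m n : R) (x y : R) : R :=
  x * y / (1 + g * y) - y - m * y / (b + n * y).

Definition jacobian2 (R : realType) (F G : R -> R -> R) (x0 y0 : R) : 'M[R]_2 :=
  \matrix_(i < 2, j < 2)
    (if i == 0 then
       (if j == 0 then derive1 (fun x => F x y0) x0 else derive1 (fun y => F x0 y) y0)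
     else
       (if j == 0 then derive1 (fun x => G x y0) x0 else derive1 (fun y => G x0 y) y0)).

Definition saddle_point (R : realType) (F G : R -> R -> R) (x0 y0 : R) : Prop :=
  F x0 y0 = 0 /\ G x0 y0 = 0 /\
  exists l1 l2 : R, l1 < 0 /\ 0 < l2 /\
    eigenvalue (jacobian2 F G x0 y0) l1 /\ eigenvalue (jacobian2 F G x0 y0) l2.

(* Main.v *)
Require Import Defs.
From HB Require Import structures.
From mathcomp Require Import all_boot all_order all_algebra.
From mathcomp Require Import all_classical all_reals all_analysis.
From mathcomp Require Import ring lra.
Import Order.TTheory GRing.Theory Num.Theory.
Local Open Scope ring_scope.
Section Aux.
Variable R : realType.
Definition M2 (p q r s : R) : 'M[R]_2 := \matrix_(i < 2, j < 2)
    (if i == 0 then (if j == 0 then p else q) else (if j == 0 then r else s)).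

Lemma mulM2 (p q r s v0 v1 : R) :
  (\row_(j < 2) (if j == 0 then v0 else v1)) *m M2 p q r s =
  \row_(j < 2) (if j == 0 then v0 * p + v1 * r else v0 * q + v1 * s).
Proof.
apply/rowP => j; rewrite !mxE !big_ord_recl big_ord0 !mxE /=.
by case: j => [[|[|//]] ?] /=; rewrite addr0.
Qed.

Lemma eig2 (p q r s l : R) : (p - l) * (s - l) - q * r = 0 -> eigenvalue (M2 p q r s) l.
Proof.
move=> h; apply/eigenvalueP.
have rowE (v0 v1 : R) : l *: (\row_(j < 2) (if j == 0 then v0 else v1)) =
   \row_(j < 2) (if j == 0 then l * v0 else l * v1).
  by apply/rowP => j; rewrite !mxE; case: (j == 0).
have rnz (v0 v1 : R) : (v0 != 0) || (v1 != 0) ->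
   (\row_(j < 2) (if j == 0 then v0 else v1)) != 0.
  case/orP => nz; apply/negP => /eqP /rowP H.
    by move: (H 0); rewrite !mxE /= => /eqP; rewrite (negbTE nz).
  by move: (H 1); rewrite !mxE /= => /eqP; rewrite (negbTE nz).
have req (A B C D : R) : A = C -> B = D ->
  \row_(j < 2) (if j == 0 then A else B) = \row_(j < 2) (if j == 0 then C else D).
  by move=> -> ->.
have [hq|hq] := eqVneq q 0; last first.
  exists (\row_(j < 2) (if j == 0 then l - s else q)); last by apply: rnz; rewrite hq orbT.
  by rewrite mulM2 rowE; apply: req; [lra | ring].
have [hl|hl] := eqVneq (l - s) 0; last first.
  exists (\row_(j < 2) (if j == 0 then l - s else q)); last by apply: rnz; rewrite hl.
  by rewrite mulM2 rowE; apply: req; [lra | ring].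
have [hr|hr] := eqVneq r 0; last first.
  exists (\row_(j < 2) (if j == 0 then r else l - p)); last by apply: rnz; rewrite hr.
  by rewrite mulM2 rowE; apply: req; [ring | rewrite hq; nra].
have [hp|hp] := eqVneq (l - p) 0; last first.
  exists (\row_(j < 2) (if j == 0 then r else l - p)); last by apply: rnz; rewrite hp orbT.
  by rewrite mulM2 rowE; apply: req; [ring | rewrite hq; nra].
exists (\row_(j < 2) (if j == 0 then 1 else 0)); last by apply: rnz; rewrite oner_neq0.
by rewrite mulM2 rowE; apply: req; [ rewrite hr; nra | rewrite hq; ring].
Qed.


Lemma saddle2 (p q r s : R) : p * s - q * r < 0 ->
  exists l1 l2 : R, l1 < 0 /\ 0 < l2 /\
    eigenvalue (M2 p q r s) l1 /\ eigenvalue (M2 p q r s) l2.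
Proof.
move=> hD.
set T := p + s. set D := p * s - q * r.
have hD' : D < 0 := hD.
have hdisc : 0 <= T ^+ 2 - 4 * D by have := sqr_ge0 T; move=> ?; lra.
set r0 := Num.sqrt (T ^+ 2 - 4 * D).
have hr0 : r0 ^+ 2 = T ^+ 2 - 4 * D by rewrite sqr_sqrtr.
have hr0p : 0 <= r0 by apply: sqrtr_ge0.
have hTl : T < r0 by nra.
have hTr : - T < r0 by nra.
exists ((T - r0) / 2), ((T + r0) / 2); split; first lra.
split; first lra.
have key (l : R) : (p - l) * (s - l) - q * r = ((2 * l - T) ^+ 2 - r0 ^+ 2) / 4.
  by rewrite hr0 /T /D; field.
split; apply: eig2; rewrite key.
  have -> : 2 * ((T - r0) / 2) - T = - r0 by field.
  by rewrite sqrrN subrr mul0r.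
have -> : 2 * ((T + r0) / 2) - T = r0 by field.
by rewrite subrr mul0r.
Qed.
Lemma dFx (a b e g m n x0 y0 : R) : 1 + g * y0 != 0 ->
  derive1 (fun x => sir_f a b e g m n x y0) x0 = - e - y0 / (1 + g * y0).
Proof.
move=> nz; rewrite /sir_f.
have H : is_derive x0 1 (fun x : R => a - e * x - x * y0 / (1 + g * y0))
   (- e - y0 / (1 + g * y0)).
  apply: is_derive_eq.
  rewrite /GRing.scale /=. field. exact: nz.
by rewrite derive1E derive_val.
Qed.

Lemma dFy (a b e g m n x0 t : R) : 1 + g * t != 0 ->
  derive1 (fun y => sir_f a b e g m n x0 y) t = - x0 / (1 + g * t) ^+ 2.
Proof.
move=> nz; rewrite /sir_f.
have Hl : is_derive t 1 (fun y : R => 1 + g * y) g.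
  by apply: is_derive_eq; rewrite add0r mul1r; exact: mulr1.
have Hd : is_derive t 1 (fun y : R => (1 + g*y)^-1) (-(1+g*t)^-2 *: g) by apply: is_deriveV.
have H : is_derive t 1 (fun y : R => a - e * x0 - x0 * y / (1 + g * y)) (- x0 / (1 + g * t) ^+ 2).
  apply: is_derive_eq.
  rewrite /GRing.scale /=. field. exact: nz.
by rewrite derive1E derive_val.
Qed.

Lemma dGx (a b e g m n x0 y0 : R) : 1 + g * y0 != 0 -> b + n * y0 != 0 ->
  derive1 (fun x => sir_g a b e g m n x y0) x0 = y0 / (1 + g * y0).
Proof.
move=> nz nz2; rewrite /sir_g.
have H : is_derive x0 1 (fun x : R => x * y0 / (1 + g * y0) - y0 - m * y0 / (b + n * y0))
   (y0 / (1 + g * y0)).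
  apply: is_derive_eq.
  rewrite /GRing.scale /=. field. exact: nz.
by rewrite derive1E derive_val.
Qed.

Lemma dGy (a b e g m n x0 t : R) : 1 + g * t != 0 -> b + n * t != 0 ->
  derive1 (fun y => sir_g a b e g m n x0 y) t =
  x0 / (1 + g * t) ^+ 2 - 1 - m * b / (b + n * t) ^+ 2.
Proof.
move=> nz nz2; rewrite /sir_g.
have Hl : is_derive t 1 (fun y : R => 1 + g * y) g.
  by apply: is_derive_eq; rewrite add0r mul1r; exact: mulr1.
have Hd : is_derive t 1 (fun y : R => (1 + g*y)^-1) (-(1+g*t)^-2 *: g) by apply: is_deriveV.
have Hl2 : is_derive t 1 (fun y : R => b + n * y) n.
  by apply: is_derive_eq; rewrite add0r mul1r; exact: mulr1.
have Hd2 : is_derive t 1 (fun y : R => (b + n*y)^-1) (-(b+n*t)^-2 *: n) by apply: is_deriveV.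
have H : is_derive t 1 (fun y : R => x0 * y / (1 + g * y) - y - m * y / (b + n * y))
  (x0 / (1 + g * t) ^+ 2 - 1 - m * b / (b + n * t) ^+ 2).
  apply: is_derive_eq.
  rewrite /GRing.scale /=. field. by rewrite nz nz2.
by rewrite derive1E derive_val.
Qed.


Lemma core (a b e g m n y : R) : 0 < a -> 0 < b -> 0 < g -> 0 < m -> 0 < n -> 0 < e -> 0 < y ->
  a * (b + n * y) = (e + (e * g + 1) * y) * (b + n * y + m) ->
  2 * ((e * g + 1) * n) * y + ((b + m) * (e * g + 1) + n * (e - a)) < 0 ->
  saddle_point (sir_f a b e g m n) (sir_g a b e g m n) (a * (1 + g * y) / (e + (e * g + 1) * y)) y.
Proof.
move=> ha0 hb hg hm hn he hy hq hQ.
have hu : 0 < 1 + g * y by nra.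
have hw : 0 < b + n * y by nra.
have hd : 0 < e + (e * g + 1) * y by nra.
have hu' : 1 + g * y != 0 by rewrite gt_eqF.
have hw' : b + n * y != 0 by rewrite gt_eqF.
have hd' : e + (e * g + 1) * y != 0 by rewrite gt_eqF.
have ha : a = (e + (e * g + 1) * y) * (b + n * y + m) / (b + n * y).
  by rewrite -hq; field.
split.
  rewrite /sir_f; field; by rewrite hu' hd'.
split.
  rewrite /sir_g.
  have -> : a * (1 + g * y) / (e + (e * g + 1) * y) * y / (1 + g * y) - y - m * y / (b + n * y)
     = y * (a * (b + n * y) - (e + (e * g + 1) * y) * (b + n * y + m)) / ((e + (e * g + 1) * y) * (b + n * y)).
    by field; rewrite hu' hw' hd'.
  by rewrite hq subrr mulr0 mul0r.
rewrite /jacobian2 (dFx _ _ _ _ _ _ _ _ hu') (dFy _ _ _ _ _ _ _ _ hu') (dGx _ _ _ _ _ _ _ _ hu' hw') (dGy _ _ _ _ _ _ _ _ hu' hw').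
apply: saddle2.
set Q := 2 * ((e * g + 1) * n) * y + ((b + m) * (e * g + 1) + n * (e - a)).
have E : (- e - y / (1 + g * y)) *
  (a * (1 + g * y) / (e + (e * g + 1) * y) / (1 + g * y) ^+ 2 - 1 -
   m * b / (b + n * y) ^+ 2) -
  - (a * (1 + g * y) / (e + (e * g + 1) * y)) / (1 + g * y) ^+ 2 *
  (y / (1 + g * y)) = y * Q / ((1 + g * y) * (b + n * y)).
  rewrite /Q ha; field; by rewrite hu' hw' hd'.
rewrite E ltr_pdivrMr ?mul0r; last exact: mulr_gt0.
have hQ2 : Q < 0 := hQ.
by rewrite pmulr_rlt0.
Qed.
End Aux.

Theorem theorem2p3 (R : realType) (a b e g m n : R) :
  0 < a -> 0 < b -> 0 < g -> 0 < m -> 0 < n -> 0 < e -> e < 1 ->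
  let a1 := (e * g + 1) * n in
  let a2 := (b + m) * (e * g + 1) + n * (e - a) in
  let a3 := e * (b + m) - a * b in
  let Delta := a2 ^+ 2 - 4 * a1 * a3 in
  let a4 := ((e * n - (b - m) * (e * g + 1))
             + Num.sqrt (4 * m * (e * g + 1) * (n * e - b * (e * g + 1)))) / n in
  n > ((e * g + 1) * b ^+ 2 + m * (e * g + 1) * b) / (m * e) ->
  a4 < a -> a < e * (m + b) / b ->
  let y2 := (- a2 - Num.sqrt Delta) / (2 * a1) in
  let x2 := a * (1 + g * y2) / (e + (e * g + 1) * y2) in
  saddle_point (sir_f a b e g m n) (sir_g a b e g m n) x2 y2.

Proof.
move=> ha hb hg hm hn he he1 a1 a2 a3 Delta a4 hn' ha4 ha3 y2 x2.
have hk : 0 < e * g + 1 by nra.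
have hme : 0 < m * e by nra.
move: hn'; rewrite ltr_pdivrMr // => hn2.
have hne : 0 < n * e - b * (e * g + 1) by nra.
set S := 4 * m * (e * g + 1) * (n * e - b * (e * g + 1)).
have hS : 0 <= S by rewrite /S; apply: mulr_ge0; [nra | lra].
set sqS := Num.sqrt S.
have hsqS2 : sqS ^+ 2 = S by rewrite sqr_sqrtr.
have hsqS0 : 0 <= sqS by apply: sqrtr_ge0.
have hSgt : (2 * (e * g + 1) * b) ^+ 2 < S by rewrite /S; nra.
have hsq : 2 * (e * g + 1) * b < sqS by nra.
set c := e * n - (b - m) * (e * g + 1).
have ha4' : c + sqS < a * n by move: ha4; rewrite /a4 -/c -/sqS ltr_pdivrMr.
have ha2 : a2 < 0 by move: ha4'; rewrite /a2 /c => ?; nra.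
have ha3' : 0 < a3 by move: ha3; rewrite /a3 ltr_pdivlMr // => ?; nra.
have hD : Delta = (n * a - c) ^+ 2 - S by rewrite /Delta /a1 /a2 /a3 /S /c; ring.
have hDp : 0 < Delta by rewrite hD; nra.
set s := Num.sqrt Delta.
have hs2 : s ^+ 2 = Delta by rewrite sqr_sqrtr // ltW.
have hs0 : 0 < s by rewrite sqrtr_gt0.
have ha1 : 0 < a1 by rewrite /a1; nra.
have hsa2 : s < - a2.
  have : s ^+ 2 < a2 ^+ 2 by rewrite hs2 /Delta; nra.
  nra.
have hy : 0 < y2 by rewrite /y2 -/s; apply: divr_gt0; nra.
have ha1' : a1 != 0 by rewrite gt_eqF.
have hQ : 2 * a1 * y2 + a2 = - s by rewrite /y2 -/s; field.
have hq0 : a1 * y2 ^+ 2 + a2 * y2 + a3 = 0.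
  have -> : a1 * y2 ^+ 2 + a2 * y2 + a3 = (s ^+ 2 - Delta) / (4 * a1).
    by rewrite /y2 -/s /Delta; field.
  by rewrite hs2 subrr mul0r.
rewrite /x2; apply: core => //.
  apply/eqP; rewrite -subr_eq0; apply/eqP.
  rewrite -[RHS]oppr0 -hq0 /a1 /a2 /a3; ring.
by move: hQ; rewrite /a1 /a2 => ->; rewrite oppr_lt0.
Qed.
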